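(* Let $G_d=(\mathcal{N},\mathcal{E}_d)$ be a directed acyclic graph with agents indexed in topological order, and let $\{\pi^k\}$ be the sequence of deterministic joint policies generated by Action-Dependent Multi-Agent Policy Iteration associated with $G_d$, under the Singleton Argmax Assumption. Let $V^{\circ}=\lim_{k\to\infty}V^{\pi^k}$ and let $G_c=(\mathcal{N},\mathcal{E}_c)$ be a coordination graph of the function $Q^{V^{\circ}}(s,a)=r(s,a)+\gamma\sum_{s'}P(s'|s,a)V^{\circ}(s')$. If $N_d(i)=N_c(i^{[+]})$ for all $i\in\mathcal{N}$, then there exists $K$ with $\pi^k=\pi^K$ for all $k\ge K$, and $\pi^K$ is globally optimal ($V^{\pi^K}=V^*$).
   Context: Markov game $\langle \mathcal{N},\mathcal{S},\mathcal{A},P,r,\gamma\rangle$: agents $\mathcal{N}=\{1,\dots,n\}$, finite state space $\mathcal{S}$, finite action spaces $\mathcal{A}_i$, $\mathcal{A}=\prod_i\mathcal{A}_i$, transition kernel $P$, reward $r$, discount $\gamma\in[0,1)$; $V^\pi$, $Q^\pi$ are the usual discounted value functions and $V^*$ the optimal value function. (The limit $V^\circ$ exists: the sequence $V^{\pi^k}$ is eventually constant.) Notation: $a_S=(a_j)_{j\in S}$, $\mathcal{A}_S=\prod_{j\in S}\mathcal{A}_j$, $-S=\mathcal{N}\setminus S$, $i^{[+]}=\{i,\dots,n\}$. Coordination graph: undirected $G_c=(\mathcal{N},\mathcal{E}_c)$ is a CG of $Q:\mathcal{S}\times\mathcal{A}\to\mathbb{R}$ if $Q(s,a)=\sum_iQ_i(s,a_i)+\sum_{(i,j)\in\mathcal{E}_c}Q_{ij}(s,a_i,a_j)$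 for some functions $Q_i,Q_{ij}$. $N_c(S)=(\bigcup_{i\in S}N_c(i))\setminus S$ where $N_c(i)$ are the neighbors of $i$. ADG: directed acyclic $G_d$, $N_d(i)=\{j:(j,i)\in\mathcal{E}_d\}$, $N_d[i]=N_d(i)\cup\{i\}$, $j<i$ for $j\in N_d(i)$. A deterministic policy associated with $G_d$ consists of maps $\pi_i:\mathcal{S}\times\mathcal{A}_{N_d(i)}\to\mathcal{A}_i$, executed in index order. For fixed $a_{N_d[i]}$, $\pi_{-N_d[i]}(s,a_{N_d[i]})$ denotes the actions of agents outside $N_d[i]$ obtained by executing their policies in index order with $a_{N_d[i]}$ held fixed. Action-Dependent Multi-Agent Policy Iteration: initialize deterministic $\pi^0$ associated with $G_d$; for $k=0,1,\dots$ compute $Q^{\pi^k}$, then for $i=1,\dots,n$, with $\pi^{k,i}=(\pi^{k+1}_1,\dots,\pi^{k+1}_{i-1},\pi^k_i,\dots,\pi^k_n)$, set for all $s,a_{N_d(i)}$: $\pi^{k+1}_i(s,a_{N_d(i)})\in\arg\max_{a_i}Q^{\pi^k}(s,a_{N_d[i]},\pi^{k,i}_{-N_d[i]}(s,a_{N_d[i]}))$. Singleton Argmax Assumption: each such argmax set is a singleton for all $k\ge1$, $i$, $s$, $a_{N_d(i)}$. *)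

(* Defs.v *)
From HB Require Import structures.
From mathcomp Require Import all_boot all_order all_algebra.
From mathcomp Require Import all_classical all_reals all_analysis.
Set Implicit Arguments. Unset Strict Implicit. Unset Printing Implicit Defensive.
Import Order.TTheory GRing.Theory Num.Theory.
Import numFieldNormedType.Exports.
Local Open Scope ring_scope.
Local Open Scope classical_set_scope.

Section MG.
Variables (R : realType) (n : nat) (S : finType) (Act : 'I_n -> finType).

Definition joint := {dffun forall i : 'I_n, Act i}.

Definition jupd (a : joint) (i : 'I_n) (x : Act i) : joint :=
  finfun (@dfwith _ (fun j => Act j) (fun j => a j) i x).

(* The input
   of pi_i is a joint action, of which only the coordinates in N_d(i) may be
   used (see [assoc]); this encodes pi_i : S x A_{N_d(i)} -> A_i. *)
Definition dpolicy := forall i : 'I_n, S -> joint -> Act i.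

Definition assoc (Ed : rel 'I_n) (pi : dpolicy) : Prop :=
  forall i s (a b : joint), (forall j, Ed j i -> a j = b j) -> pi i s a = pi i s b.

(* For an ADG (Ed j i -> j < i), n rounds of the update
   b_j := (if j \in F then a_j else pi_j(s, b)) reach the fixed point, which
   is exactly the sequential execution in index order. *)
Definition exec (pi : dpolicy) (s : S) (F : {set 'I_n}) (a : joint) : joint :=
  iter n (fun b : joint => finfun (fun j => if j \in F then a j else pi j s b)) a.

Definition Nd (Ed : rel 'I_n) (i : 'I_n) : {set 'I_n} := [set j | Ed j i].
Definition Ndc (Ed : rel 'I_n) (i : 'I_n) : {set 'I_n} := i |: Nd Ed i.

Definition Nc (Ec : rel 'I_n) (T : {set 'I_n}) : {set 'I_n} :=
  [set j | [exists i in T, Ec i j]] :\: T.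
Definition iplus (i : 'I_n) : {set 'I_n} := [set j : 'I_n | (i <= j)%N].

(* Coordination graph (undirected: Ec symmetric, irreflexive; each edge
   {i,j} counted once, as the pair i < j). *)
Definition is_CG (Ec : rel 'I_n) (Q : S -> joint -> R) : Prop :=
  exists (Qi : forall i : 'I_n, S -> Act i -> R)
         (Qij : forall i j : 'I_n, S -> Act i -> Act j -> R),
  forall s (a : joint),
    Q s a = \sum_(i < n) Qi i s (a i)
            + \sum_(i < n) \sum_(j < n | (i < j)%N && Ec i j) Qij i j s (a i) (a j).

Variables (P : S -> joint -> S -> R) (r : S -> joint -> R) (gamma : R).

Fixpoint sdist (sigma : S -> joint) (s : S) (t : nat) : S -> R :=
  match t with
  | 0 => fun s' => (s' == s)%:R
  | t'.+1 => fun s' => \sum_(s'' : S) sdist sigma s t' s'' * P s'' (sigma s'') s'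
  end.

Definition Vsig (sigma : S -> joint) (s : S) : R :=
  limn (fun N => \sum_(t < N) gamma ^+ t *
                   \sum_(s' : S) sdist sigma s t s' * r s' (sigma s')).

Definition QofV (V : S -> R) (s : S) (a : joint) : R :=
  r s a + gamma * \sum_(s' : S) P s a s' * V s'.

Definition Vstar (s : S) : R := sup [set Vsig sigma s | sigma in [set: S -> joint]].

(* joint action of a decentralized policy at s (a0 is any starting point;
   the result does not depend on it for policies associated with an ADG) *)
Definition jact (a0 : joint) (pi : dpolicy) (s : S) : joint := exec pi s finset.set0 a0.

Definition Vpol (a0 : joint) (pi : dpolicy) (s : S) : R := Vsig (jact a0 pi) s.
Definition Qpol (a0 : joint) (pi : dpolicy) : S -> joint -> R := QofV (Vpol a0 pi).

Definition mixpol (pinew piold : dpolicy) (i : 'I_n) : dpolicy :=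
  fun j => if (j < i)%N then pinew j else piold j.

(* the objective maximized by agent i at iteration k, as a function of a_i,
   with a_{N_d(i)} taken from a:  Q^{pi^k}(s, a_{N_d[i]}, pi^{k,i}_{-N_d[i]}) *)
Definition objective (Ed : rel 'I_n) (a0 : joint) (pik pik1 : dpolicy)
  (i : 'I_n) (s : S) (a : joint) (x : Act i) : R :=
  Qpol a0 pik s (exec (mixpol pik1 pik i) s (Ndc Ed i) (jupd a x)).

Definition Vcirc (a0 : joint) (pis : nat -> dpolicy) (s : S) : R :=
  limn (fun k => Vpol a0 (pis k) s).

Definition is_argmax (T : Type) (f : T -> R) (x : T) : Prop := forall y, f y <= f x.

End MG.
Arguments objective {R n S Act} P r gamma Ed a0 pik pik1 i s a x.

(* Main.v *)
Require Import Defs.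
From HB Require Import structures.
From mathcomp Require Import all_boot all_order all_algebra.
From mathcomp Require Import all_classical all_reals all_analysis.
From mathcomp Require Import lra.
Import Order.TTheory GRing.Theory Num.Theory.
Import numFieldNormedType.Exports.
Local Open Scope ring_scope.
Local Open Scope classical_set_scope.
Set Implicit Arguments. Unset Strict Implicit. Unset Printing Implicit Defensive.
From mathcomp Require Import zify.
Section Comb.
Variables (R : realType) (n : nat) (S : finType) (Act : 'I_n -> finType).
Variable (Ed : rel 'I_n).
Hypothesis HEd : forall i j : 'I_n, Ed j i -> (j < i)%N.

Definition fp (pi : dpolicy S Act) s (F : {set 'I_n}) (a b : joint Act) :=
  forall j, b j = if j \in F then a j else pi j s b.

Lemma strong_ind (Pr : 'I_n -> Prop) :
  (forall j : 'I_n, (forall l : 'I_n, (l < j)%N -> Pr l) -> Pr j) -> forall j, Pr j.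
Proof.
move=> H.
suff: forall N (j : 'I_n), (j < N)%N -> Pr j by move=> h j; apply: (h j.+1).
elim=> [//|N IH] j hj; apply: H => l hl; apply: IH.
exact: leq_trans hl _.
Qed.

Lemma exec_fp pi s F a : assoc Ed pi -> fp pi s F a (exec pi s F a).
Proof.
move=> Ha.
set step := (fun b : joint Act => finfun (fun j => if j \in F then a j else pi j s b)).
have H : forall t (j : 'I_n), (j < t)%N -> iter t.+1 step a j = iter t step a j.
  elim=> [//|t IH] j hj.
  rewrite iterS [in RHS]iterS /step !ffunE; case: ifP => // _.
  apply: Ha => l /HEd hl; apply: IH; exact: leq_trans hl _.
move=> j; rewrite /exec -/step.
have <- : step (iter n step a) j = iter n step a j by rewrite -iterS H.
by rewrite /step ffunE.
Qed.

Lemma fp_agree (pi1 pi2 : dpolicy S Act) s F1 F2 a1 a2 b1 b2 :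
  assoc Ed pi1 -> fp pi1 s F1 a1 b1 -> fp pi2 s F2 a2 b2 -> forall (Z : pred 'I_n),
  (forall j, Z j -> (j \in F1) = (j \in F2)) ->
  (forall j, Z j -> j \in F1 -> a1 j = a2 j) ->
  (forall j, Z j -> j \notin F1 ->
      (forall c, pi1 j s c = pi2 j s c) /\ forall l, Ed l j -> Z l) ->
  forall j, Z j -> b1 j = b2 j.
Proof.
move=> Ha h1 h2 Z hF ha hpi; apply: strong_ind => j IH Zj.
rewrite h1 h2 -hF //; case: ifP => jF; first exact: ha.
have [e hl] := hpi j Zj (negbT jF); rewrite -e.
apply: Ha => l El; apply: IH; [exact: HEd | exact: hl].
Qed.

Lemma fp_uniq pi s F a b1 b2 : assoc Ed pi -> fp pi s F a b1 -> fp pi s F a b2 -> b1 = b2.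
Proof.
move=> Ha h1 h2; apply/ffunP => j.
have := fp_agree (Z := predT) Ha h1 h2; apply => //.
Qed.

Lemma assoc_mix (p1 p2 : dpolicy S Act) i :
  assoc Ed p1 -> assoc Ed p2 -> assoc Ed (mixpol p1 p2 i).
Proof. by move=> h1 h2 j s a b h; rewrite /mixpol; case: ifP => _; [apply: h1|apply: h2]. Qed.

Lemma jupd_id (a : joint Act) i : jupd a (a i) = a.
Proof.
apply/ffunP => j; rewrite /jupd ffunE; case: dfwithP => //.
Qed.

Lemma jupd_in (a : joint Act) i (x : Act i) : jupd a x i = x.
Proof. rewrite /jupd ffunE; exact: dfwith_in. Qed.

Lemma jupd_out (a : joint Act) i (x : Act i) j : i != j -> jupd a x j = a j.
Proof. by move=> h; rewrite /jupd ffunE; exact: dfwith_out. Qed.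

End Comb.
Section MDP.
Variables (R : realType) (n : nat) (S : finType) (Act : 'I_n -> finType).
Variables (P : S -> joint Act -> S -> R) (r : S -> joint Act -> R) (gamma : R).
Hypothesis HP0 : forall s a s', 0 <= P s a s'.
Hypothesis HP1 : forall s a, \sum_(s' : S) P s a s' = 1.
Hypothesis Hgamma : 0 <= gamma < 1.

Lemma sdist_ge0 sg s t s' : 0 <= sdist P sg s t s'.
Proof.
elim: t s' => [|t IH] s' /=; first by case: (s' == s).
by apply: sumr_ge0 => u _; apply: mulr_ge0.
Qed.

Lemma sdist_sum sg s t : \sum_(s' : S) sdist P sg s t s' = 1.
Proof.
elim: t => [|t IH] /=.
  by rewrite (bigD1 s) //= eqxx big1 ?addr0 // => u /negbTE ->.
rewrite exchange_big /= -[RHS]IH; apply: eq_bigr => u _.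
by rewrite -mulr_sumr HP1 mulr1.
Qed.

Lemma sdist_le1 sg s t s' : sdist P sg s t s' <= 1.
Proof.
rewrite -(sdist_sum sg s t) (bigD1 s') //= lerDl.
by apply: sumr_ge0 => u _; apply: sdist_ge0.
Qed.

Lemma sdist_first sg s t s' :
  sdist P sg s t.+1 s' = \sum_(u : S) P s (sg s) u * sdist P sg u t s'.
Proof.
elim: t s' => [|t IH] s'.
  rewrite /= (bigD1 s) //= eqxx mul1r big1 ?addr0; last by move=> u /negbTE ->; rewrite mul0r.
  rewrite (bigD1 s') //= eqxx mulr1 big1 ?addr0 // => u /negbTE; rewrite eq_sym => ->.
  by rewrite mulr0.
transitivity (\sum_(s'' : S) (\sum_(u : S) P s (sg s) u * sdist P sg u t s'') * P s'' (sg s'') s').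
  transitivity (\sum_(s'':S) sdist P sg s t.+1 s'' * P s'' (sg s'') s'); first by [].
  by apply: eq_bigr => s'' _; rewrite IH.
under eq_bigr do rewrite mulr_suml.
rewrite exchange_big /=; apply: eq_bigr => u _.
by rewrite mulr_sumr; apply: eq_bigr => s'' _; rewrite mulrA.
Qed.

Definition wt sg t s := \sum_(s' : S) sdist P sg s t s' * r s' (sg s').
Definition ut sg N s := \sum_(t < N) gamma ^+ t * wt sg t s.

Lemma wt_first sg t s : wt sg t.+1 s = \sum_(u : S) P s (sg s) u * wt sg t u.
Proof.
rewrite /wt; under eq_bigr do rewrite sdist_first mulr_suml.
rewrite exchange_big /=; apply: eq_bigr => u _.
by rewrite mulr_sumr; apply: eq_bigr => s' _; rewrite mulrA.
Qed.

Lemma wt0 sg s : wt sg 0 s = r s (sg s).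
Proof.
rewrite /wt /= (bigD1 s) //= eqxx mul1r big1 ?addr0 // => u /negbTE ->.
by rewrite mul0r.
Qed.

Lemma ut_rec sg N s :
  ut sg N.+1 s = r s (sg s) + gamma * \sum_(u : S) P s (sg s) u * ut sg N u.
Proof.
rewrite /ut big_ord_recl /= expr0 mul1r wt0; congr (_ + _).
under eq_bigr do rewrite /bump /= add1n wt_first exprS.
under [in RHS]eq_bigr do rewrite /ut mulr_sumr.
rewrite exchange_big /= mulr_sumr; apply: eq_bigr => t _.
rewrite !mulr_sumr; apply: eq_bigr => u _; rewrite /=; lra.
Qed.

Lemma ut_cvg sg s : cvgn (ut sg ^~ s).
Proof.
set f := fun t => gamma ^+ t * wt sg t s.
have -> : ut sg ^~ s = series f.
  by apply/funext => N; rewrite /series /= /ut big_mkord.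
apply: normed_cvg.
set M := \sum_(s' : S) `|r s' (sg s')|.
apply: (@series_le_cvg _ _ (geometric M gamma)).
- by move=> t; rewrite normr_ge0.
- move=> t; rewrite /geometric /= mulr_ge0 ?exprn_ge0 //; last by case/andP: Hgamma.
  by apply: sumr_ge0 => u _.
- move=> t; have g0 : 0 <= gamma by case/andP: Hgamma.
  rewrite /geometric /f /= normrM mulrC (ger0_norm (exprn_ge0 t g0)).
  apply: ler_wpM2r; first by rewrite exprn_ge0.
  rewrite /wt; apply: le_trans (ler_norm_sum _ _ _) _; apply: ler_sum => u _.
  rewrite normrM ger0_norm ?sdist_ge0 //.
  by rewrite -[X in _ <= X]mul1r ler_wpM2r ?sdist_le1.
- apply: is_cvg_geometric_series.
  by case/andP: Hgamma => g0 g1; rewrite ger0_norm.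
Qed.

Lemma Vsig_fix sg s :
  Vsig P r gamma sg s = r s (sg s) + gamma * \sum_(u : S) P s (sg s) u * Vsig P r gamma sg u.
Proof.
have hu : forall s, ut sg ^~ s @ \oo --> Vsig P r gamma sg s.
  by move=> s'; apply: ut_cvg.
have h1 : (fun N => ut sg N.+1 s) @ \oo --> Vsig P r gamma sg s.
  by rewrite (cvg_shiftS (ut sg ^~ s)).
have h2 : (fun N => ut sg N.+1 s) @ \oo -->
     r s (sg s) + gamma * \sum_(u : S) P s (sg s) u * Vsig P r gamma sg u.
  under eq_cvg do rewrite ut_rec.
  apply: cvgD; first exact: cvg_cst.
  apply: cvgMr.
  apply: cvg_big => //; first exact: add_continuous.
  move=> u _; apply: cvgMr; exact: hu.
exact: (cvg_unique _ h1 h2).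
Qed.

Lemma max_princ (sg : S -> joint Act) (D : S -> R) :
  (forall s, D s <= gamma * \sum_(u : S) P s (sg s) u * D u) -> forall s, D s <= 0.
Proof.
move=> HD s.
case: (@arg_maxP _ _ _ s predT D) => // m _ Hm.
have Hle : D m <= gamma * D m.
  apply: le_trans (HD m) _; apply: ler_wpM2l; first by case/andP: Hgamma.
  rewrite -[X in _ <= X]mul1r -(HP1 m (sg m)) mulr_suml.
  by apply: ler_sum => u _; apply: ler_wpM2l => //; apply: Hm.
have : D m <= 0 by case/andP: Hgamma => g0 g1; nra.
by apply: le_trans; apply: Hm.
Qed.

Lemma comp_le (sg : S -> joint Act) (W : S -> R) :
  (forall s, W s <= r s (sg s) + gamma * \sum_(u : S) P s (sg s) u * W u) ->
  forall s, W s <= Vsig P r gamma sg s.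
Proof.
move=> HW s; rewrite -subr_le0.
apply: (@max_princ sg (fun s => W s - Vsig P r gamma sg s)) => s'.
have E : \sum_(u : S) P s' (sg s') u * (W u - Vsig P r gamma sg u) =
  \sum_(u : S) P s' (sg s') u * W u - \sum_(u : S) P s' (sg s') u * Vsig P r gamma sg u.
  by rewrite -sumrB; apply: eq_bigr => u _; rewrite mulrBr.
rewrite E mulrBr; have := HW s'; rewrite [Vsig _ _ _ _ s']Vsig_fix; lra.
Qed.

Lemma comp_ge (sg : S -> joint Act) (W : S -> R) :
  (forall s, r s (sg s) + gamma * \sum_(u : S) P s (sg s) u * W u <= W s) ->
  forall s, Vsig P r gamma sg s <= W s.
Proof.
move=> HW s; rewrite -subr_le0.
apply: (@max_princ sg (fun s => Vsig P r gamma sg s - W s)) => s'.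
have E : \sum_(u : S) P s' (sg s') u * (Vsig P r gamma sg u - W u) =
  \sum_(u : S) P s' (sg s') u * Vsig P r gamma sg u - \sum_(u : S) P s' (sg s') u * W u.
  by rewrite -sumrB; apply: eq_bigr => u _; rewrite mulrBr.
rewrite E mulrBr; have := HW s'; rewrite [Vsig _ _ _ _ s']Vsig_fix; lra.
Qed.

End MDP.
Local Close Scope classical_set_scope.

Lemma noninc_evconst (f : nat -> nat) :
  (forall k, (f k.+1 <= f k)%N) -> exists K, forall k, (K <= k)%N -> f k = f K.
Proof.
move=> Hf.
have mono : forall k d, (f (k + d) <= f k)%N.
  move=> k; elim=> [|d IH]; first by rewrite addn0.
  by rewrite addnS; apply: leq_trans (Hf _) IH.
suff: forall m k0, (f k0 <= m)%N -> exists K, forall k, (K <= k)%N -> f k = f K.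
  by move=> h; apply: (h (f 0) 0).
elim=> [|m IH] k0 hk0.
  exists k0 => k hk; have := mono k0 (k - k0)%N; rewrite (subnKC hk); lia.
case: (pselect (forall k, (k0 <= k)%N -> f k = f k0)) => [h|]; first by exists k0.
move/existsNP => [k /not_implyP [hk hne]].
apply: (IH k); have := mono k0 (k - k0)%N; rewrite (subnKC hk); lia.
Qed.

Section Main.
Variables (R : realType) (n : nat) (S : finType) (Act : 'I_n -> finType)
  (P : S -> joint Act -> S -> R) (r : S -> joint Act -> R) (gamma : R).
Hypothesis HP0 : forall s a s', 0 <= P s a s'.
Hypothesis HP1 : forall s a, \sum_(s' : S) P s a s' = 1.
Hypothesis Hgamma : 0 <= gamma < 1.
Variables (a0 : joint Act) (Ed : rel 'I_n).
Hypothesis HEd : forall i j : 'I_n, Ed j i -> (j < i)%N.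
Variable (pi : nat -> dpolicy S Act).
Hypothesis Hassoc : forall k, assoc Ed (pi k).
Hypothesis Hupdate : forall (k : nat) (i : 'I_n) (s : S) (a : joint Act),
     is_argmax (objective P r gamma Ed a0 (pi k) (pi k.+1) i s a) (pi k.+1 i s a).

Let V k := Vpol P r gamma a0 (pi k).
Let sig k := jact a0 (pi k).
Let Q k := Qpol P r gamma a0 (pi k).

Lemma Vbell k s : V k s = Q k s (sig k s).
Proof. by rewrite /V /Q /Qpol /QofV /Vpol Vsig_fix. Qed.

Lemma jact_ext (p1 p2 : dpolicy S Act) s :
  assoc Ed p1 -> assoc Ed p2 -> (forall j c, p1 j s c = p2 j s c) ->
  jact a0 p1 s = jact a0 p2 s.
Proof.
move=> h1 h2 he; apply/ffunP => j.
have := fp_agree HEd (Z := predT) h1 (exec_fp HEd s finset.set0 a0 h1) (exec_fp HEd s finset.set0 a0 h2).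
by apply => // j' _ _; split => // c; apply: he.
Qed.

Definition mixn k (m : nat) : dpolicy S Act :=
  fun j => if (j < m)%N then pi k.+1 j else pi k j.

Lemma assoc_mixn k m : assoc Ed (mixn k m).
Proof. by move=> j s a b h; rewrite /mixn; case: ifP => _; apply: Hassoc. Qed.

Lemma mix_step k (m : nat) (hm : (m < n)%N) s :
  Q k s (jact a0 (mixn k m) s) <= Q k s (jact a0 (mixn k m.+1) s).
Proof.
set i := Ordinal hm.
set b := jact a0 (mixn k m.+1) s.
set c := jact a0 (mixn k m) s.
have Hb : fp (mixn k m.+1) s finset.set0 a0 b := exec_fp HEd s finset.set0 a0 (assoc_mixn k m.+1).
have Hc : fp (mixn k m) s finset.set0 a0 c := exec_fp HEd s finset.set0 a0 (assoc_mixn k m).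
have Hu := @Hupdate k i s b.
have HmE : mixpol (pi k.+1) (pi k) i = mixn k m by [].
have Ebi : b i = pi k.+1 i s b by rewrite Hb finset.in_set0 /mixn /= ltnSn.
have C1 : exec (mixpol (pi k.+1) (pi k) i) s (Ndc Ed i) (jupd b (pi k.+1 i s b)) = b.
  rewrite HmE; apply: (fp_uniq HEd (assoc_mixn k m) (exec_fp HEd _ _ _ (assoc_mixn k m))).
  move=> j; case: ifP => jN.
    case: (eqVneq i j) => [<-|nij]; first by rewrite jupd_in.
    by rewrite jupd_out.
  rewrite {1}Hb finset.in_set0 /mixn.
  have nij : (j : nat) != m.
    apply/eqP => ejm; have eji : j = i by apply: val_inj.
    by move: jN; rewrite eji /Ndc in_setU1 eqxx.
  by rewrite ltnS leq_eqVlt (negbTE nij).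
have pre : forall l : 'I_n, (l < m)%N -> c l = b l.
  apply: (fp_agree HEd (Z := fun l : 'I_n => (l < m)%N) (assoc_mixn k m) Hc Hb) => //.
  move=> j hj _; split.
    by move=> c'; rewrite /mixn hj ltnW.
  by move=> l /HEd hl; apply: ltn_trans hl hj.
have C2 : exec (mixpol (pi k.+1) (pi k) i) s (Ndc Ed i) (jupd b (pi k i s b)) = c.
  rewrite HmE; apply: (fp_uniq HEd (assoc_mixn k m) (exec_fp HEd _ _ _ (assoc_mixn k m))).
  move=> j; case: ifP => jN; last by rewrite {1}Hc finset.in_set0.
  case: (eqVneq i j) => [<-|nij].
    rewrite jupd_in Hc finset.in_set0 /mixn /= ltnn; apply: Hassoc => l /HEd hl.
    by apply: pre.
  rewrite jupd_out //; apply: pre.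
  move: jN; rewrite /Ndc !finset.inE eq_sym (negbTE nij) /= => /HEd //.
have := Hu (pi k i s b); rewrite /objective C1 C2 //.
Qed.


Lemma improve k s : Q k s (sig k s) <= Q k s (sig k.+1 s).
Proof.
have H : forall m, (m <= n)%N -> Q k s (sig k s) <= Q k s (jact a0 (mixn k m) s).
  elim=> [_|m IH hm].
    by rewrite (@jact_ext (mixn k 0) (pi k)) //; exact: assoc_mixn.
  apply: le_trans (IH (ltnW hm)) _; exact: mix_step.
apply: le_trans (H n (leqnn n)) _.
rewrite (@jact_ext (mixn k n) (pi k.+1)) //; try exact: assoc_mixn.
by move=> j c; rewrite /mixn ltn_ord.
Qed.

Lemma V_mono k s : V k s <= V k.+1 s.
Proof.
apply: (comp_le HP0 HP1 Hgamma) => s'.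
by rewrite Vbell; apply: improve.
Qed.

Lemma V_eventually : exists K1, (1 <= K1)%N /\ forall k, (K1 <= k)%N -> forall s, V k s = V K1 s.
Proof.
pose phi k := #|[set sg : {ffun S -> joint Act} | [forall s, V k s <= Vsig P r gamma sg s]]|.
have Hsub : forall k, [set sg : {ffun S -> joint Act} | [forall s, V k.+1 s <= Vsig P r gamma sg s]]
   \subset [set sg : {ffun S -> joint Act} | [forall s, V k s <= Vsig P r gamma sg s]].
  move=> k; apply/fintype.subsetP => sg; rewrite !finset.inE => /forallP h; apply/forallP => s.
  exact: le_trans (V_mono k s) (h s).
have Hphi : forall k, (phi k.+1 <= phi k)%N by move=> k; rewrite /phi; exact: (subset_leq_card (Hsub k)).
have Hsg : forall k s, Vsig P r gamma [ffun s => sig k s] s = V k s.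
  move=> k s; rewrite /V /Vpol; congr (Vsig _ _ _ _ _).
  by apply/funext => x; rewrite ffunE.
have Heq : forall k, phi k.+1 = phi k -> forall s, V k.+1 s = V k s.
  move=> k hk s; apply/le_anti; rewrite V_mono andbT.
  have /subset_cardP : #|[set sg : {ffun S -> joint Act} | [forall s, V k.+1 s <= Vsig P r gamma sg s]]|
     = #|[set sg : {ffun S -> joint Act} | [forall s, V k s <= Vsig P r gamma sg s]]| by [].
  move=> /(_ (Hsub k)) /(_ [ffun s => sig k s]); rewrite !finset.inE.
  have -> : [forall s0, V k s0 <= Vsig P r gamma [ffun s1 => sig k s1] s0].
    by apply/forallP => s0; rewrite Hsg.
  by move/forallP/(_ s); rewrite Hsg.
have [K0 HK0] := noninc_evconst Hphi.
exists K0.+1; split => //.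
have H : forall d s, V (K0.+1 + d) s = V K0.+1 s.
  elim=> [|d IH] s; first by rewrite addn0.
  rewrite addnS Heq ?IH //.
  by rewrite HK0 ?[phi (K0.+1 + d)]HK0 //; lia.
by move=> k hk s; rewrite -(subnKC hk) H.
Qed.

Hypothesis Hsingleton : forall (k : nat) (i : 'I_n) (s : S) (a : joint Act) (x y : Act i),
     (1 <= k)%N ->
     is_argmax (objective P r gamma Ed a0 (pi k) (pi k.+1) i s a) x ->
     is_argmax (objective P r gamma Ed a0 (pi k) (pi k.+1) i s a) y -> x = y.
Variables (Ec : rel 'I_n).
Hypothesis HEc_sym : symmetric Ec.
Hypothesis HCG : is_CG Ec (QofV P r gamma (Vcirc P r gamma a0 pi)).
Hypothesis HN : forall i : 'I_n, Nd Ed i = Nc Ec (iplus i).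

Let Qc := QofV P r gamma (Vcirc P r gamma a0 pi).

Lemma zone_closed (i j l : 'I_n) : (i <= j)%N -> Ed l j -> (i <= l)%N || (l \in Nd Ed i).
Proof.
move=> hij hl; case: (leqP i l) => //= hli.
have : l \in Nd Ed j by rewrite /Nd inE.
rewrite !HN /Nc /iplus !inE -!ltnNge hli /=.
move=> /andP [_ /existsP [m /andP [hm Em]]]; apply/existsP; exists m.
by rewrite Em andbT; rewrite inE in hm; rewrite inE; apply: leq_trans hij hm.
Qed.

Lemma decomp (i : 'I_n) s (b1 b2 b3 b4 : joint Act) :
  (forall j : 'I_n, (i <= j)%N || (j \in Nd Ed i) -> b1 j = b3 j /\ b2 j = b4 j) ->
  (forall j : 'I_n, (j < i)%N -> b1 j = b2 j /\ b3 j = b4 j) ->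
  Qc s b1 - Qc s b2 = Qc s b3 - Qc s b4.
Proof.
move=> hA hB; have [Qi [Qij HQ]] := HCG; rewrite /Qc !HQ.
set X := fun b : joint Act => \sum_(j < n) Qi j s (b j).
set Y := fun b : joint Act => \sum_(j < n) \sum_(l < n | (j < l)%N && Ec j l) Qij j l s (b j) (b l).
have hX : X b1 - X b2 = X b3 - X b4.
  rewrite /X -!sumrB; apply: eq_bigr => j _.
  case: (leqP i j) => hij.
    by have [-> ->] := hA j (introT orP (or_introl hij)).
  by have [-> ->] := hB j hij; rewrite !subrr.
have hY : Y b1 - Y b2 = Y b3 - Y b4.
  rewrite /Y -!sumrB; apply: eq_bigr => j _; rewrite -!sumrB.
  apply: eq_bigr => l /andP [hjl Ejl].
  case: (leqP i l) => hil.
    have hj : (i <= j)%N || (j \in Nd Ed i).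
      case: (leqP i j) => //= hji.
      rewrite HN /Nc /iplus !inE -ltnNge hji /=.
      by apply/existsP; exists l; rewrite inE hil HEc_sym.
    have [-> ->] := hA j hj.
    by have [-> ->] := hA l (introT orP (or_introl hil)).
  have hji : (j < i)%N by apply: ltn_trans hjl hil.
  have [-> ->] := hB j hji.
  by have [-> ->] := hB l hil; rewrite !subrr.
rewrite -/(X b1) -/(X b2) -/(X b3) -/(X b4) -/(Y b1) -/(Y b2) -/(Y b3) -/(Y b4).
lra.
Qed.

Lemma prefix_e (p : dpolicy S Act) (i : 'I_n) s (a : joint Act) (x y : Act i) :
  assoc Ed p -> forall j : 'I_n, (j < i)%N ->
  exec p s (Ndc Ed i) (jupd a x) j = exec p s (Ndc Ed i) (jupd a y) j.
Proof.
move=> hp.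
apply: (fp_agree HEd (Z := fun j : 'I_n => (j < i)%N) hp (exec_fp HEd _ _ _ hp) (exec_fp HEd _ _ _ hp)) => //.
- move=> j hj _; have nij : i != j by rewrite neq_ltn hj orbT.
  by rewrite !jupd_out.
- by move=> j hj _; split => // l /HEd hl; apply: ltn_trans hl hj.
Qed.

Lemma Azone_closed (i j : 'I_n) : (i <= j)%N || (j \in Nd Ed i) -> j \notin Ndc Ed i -> (i < j)%N.
Proof.
rewrite /Ndc in_setU1 negb_or => /orP [hij|hj] /andP [nij hjn]; last by rewrite hj in hjn.
by rewrite ltn_neqAle hij andbT; apply: contra nij => /eqP e; apply/eqP/val_inj.
Qed.

Section Conv.
Variable K1 : nat.
Hypothesis HK1pos : (1 <= K1)%N.
Hypothesis HK1 : forall k, (K1 <= k)%N -> forall s, V k s = V K1 s.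

Lemma Vcirc_eq s : Vcirc P r gamma a0 pi s = V K1 s.
Proof.
rewrite /Vcirc; apply: cvg_lim => //; apply: cvg_near_cst.
by exists K1 => // k /= hk; apply: HK1.
Qed.

Lemma QK k : (K1 <= k)%N -> forall s a, Q k s a = Qc s a.
Proof.
move=> hk s a; rewrite /Q /Qc /Qpol /QofV; congr (_ + _ * _); apply: eq_bigr => u _.
by rewrite Vcirc_eq -(HK1 hk).
Qed.

Lemma polstep k k' (i : 'I_n) : (K1 <= k)%N -> (K1 <= k')%N ->
  (forall j : 'I_n, (i < j)%N -> forall s c, pi k j s c = pi k' j s c) ->
  forall s a, pi k.+1 i s a = pi k'.+1 i s a.
Proof.
move=> hk hk' hpi s a.
pose e kk (x : Act i) := exec (mixpol (pi kk.+1) (pi kk) i) s (Ndc Ed i) (jupd a x).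
have Hm : forall kk, assoc Ed (mixpol (pi kk.+1) (pi kk) i) by move=> kk; apply: assoc_mix.
have Hob : forall kk x, (K1 <= kk)%N -> objective P r gamma Ed a0 (pi kk) (pi kk.+1) i s a x = Qc s (e kk x).
  by move=> kk x hkk; rewrite /objective -(QK hkk).
have hA : forall x (j : 'I_n), (i <= j)%N || (j \in Nd Ed i) -> e k x j = e k' x j.
  move=> x; apply: (fp_agree HEd (Z := fun j : 'I_n => (i <= j)%N || (j \in Nd Ed i)) (Hm k) (exec_fp HEd _ _ _ (Hm k)) (exec_fp HEd _ _ _ (Hm k'))) => //.
  move=> j hZ hjn; have hij := Azone_closed hZ hjn; split.
    by move=> c; rewrite /mixpol ltnNge (ltnW hij) /=; apply: hpi.
  move=> l hl; apply: zone_closed hl; exact: ltnW.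
have key : forall x y, Qc s (e k x) - Qc s (e k y) = Qc s (e k' x) - Qc s (e k' y).
  move=> x y; apply: (@decomp i s) => j hj.
    by split; apply: hA.
  by split; apply: prefix_e.
have H1 := @Hupdate k i s a.
have H2 := @Hupdate k' i s a.
apply: (Hsingleton (leq_trans HK1pos hk')) H2 => y.
rewrite !Hob //.
have := H1 y; rewrite !Hob // => hy.
have := key (pi k.+1 i s a) y; rewrite -subr_ge0 => <-; rewrite subr_ge0 //.
Qed.

Lemma pol_const d : forall j : 'I_n, (n - d <= j)%N -> forall k, (K1 + d <= k)%N ->
  forall s c, pi k j s c = pi (K1 + d) j s c.
Proof.
elim: d => [|d IH] j hj k hk s c.
  by move: hj; rewrite subn0 leqNgt ltn_ord.
case: (leqP (n - d) j) => hjd.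
  rewrite (IH j hjd k) ?(IH j hjd (K1 + d.+1)) //; lia.
have -> : k = (k - 1).+1 by lia.
rewrite addnS; apply: (polstep (k:=(k-1)%N)); try lia.
move=> l hl s' c'; apply: IH; lia.
Qed.

Let K := (K1 + n)%N.

Lemma piK_fix j s c : pi K.+1 j s c = pi K j s c.
Proof. by apply: pol_const; rewrite ?subnn //; rewrite /K; lia. Qed.

Lemma Cstep d : forall m, (m + d = n)%N -> forall s b,
  Qc s b <= Qc s (exec (pi K) s [set j : 'I_n | (j < m)%N] b).
Proof.
have HK1K : (K1 <= K)%N by rewrite /K leq_addr.
elim: d => [|d IH] m hm s b.
  rewrite addn0 in hm; subst m.
  have -> : exec (pi K) s [set j : 'I_n | (j < n)%N] b = b.
    apply: (fp_uniq HEd (Hassoc K) (exec_fp HEd s _ b (Hassoc K))).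
    by move=> j; rewrite inE ltn_ord.
  by [].
have hmn : (m < n)%N by lia.
set i := Ordinal hmn.
set pK := pi K.
pose G (x : Act i) := exec pK s [set j : 'I_n | (j < m.+1)%N] (jupd b x).
pose e (x : Act i) := exec (mixpol (pi K.+1) (pi K) i) s (Ndc Ed i) (jupd b x).
have HG : forall x, fp pK s [set j : 'I_n | (j < m.+1)%N] (jupd b x) (G x).
  by move=> x; apply: (exec_fp HEd); apply: Hassoc.
have Hm : assoc Ed (mixpol (pi K.+1) (pi K) i) by apply: assoc_mix.
have xs := pi K.+1 i s b.
have h1 : Qc s b <= Qc s (G (b i)).
  by rewrite /G jupd_id; apply: IH; lia.
have hA : forall x (j : 'I_n), (i <= j)%N || (j \in Nd Ed i) -> G x j = e x j.
  move=> x; apply: (fp_agree HEd (Z := fun j : 'I_n => (i <= j)%N || (j \in Nd Ed i)) (Hassoc K) (HG x) (exec_fp HEd _ _ _ Hm)) => //.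
  - move=> j /orP [hij|hjN]; rewrite inE /Ndc in_setU1.
      case: (eqVneq j i) => [->|nji]; first by rewrite ltnSn.
      have : (i < j)%N by rewrite ltn_neqAle eq_sym nji hij.
      rewrite /= => hij'; rewrite ltnNge hij' /=.
      by apply/esym/negbTE; apply/negP; rewrite inE => /HEd; rewrite ltnNge (ltnW hij').
    rewrite hjN orbT; move: hjN; rewrite inE => /HEd hji.
    by apply: ltnW.
  - move=> j hZ; rewrite inE -leqNgt => hmj; split.
      by move=> c; rewrite /mixpol /= ltnNge (ltnW hmj).
    move=> l hl; apply: zone_closed hl; exact: ltnW.
have hB : forall x y (j : 'I_n), (j < i)%N -> G x j = G y j.
  move=> x y; apply: (fp_agree HEd (Z := fun j : 'I_n => (j < i)%N) (Hassoc K) (HG x) (HG y)) => //.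
  - move=> j hj _; have nij : i != j by rewrite neq_ltn hj orbT.
    by rewrite !jupd_out.
  - by move=> j hj _; split => // l /HEd hl; apply: ltn_trans hl hj.
have h2 : Qc s (G (b i)) <= Qc s (G (pi K.+1 i s b)).
  have key : Qc s (G (pi K.+1 i s b)) - Qc s (G (b i)) =
             Qc s (e (pi K.+1 i s b)) - Qc s (e (b i)).
    apply: (@decomp i s) => j hj; first by split; apply: hA.
    by split; [apply: hB | apply: prefix_e].
  rewrite -subr_ge0 key subr_ge0.
  have := @Hupdate K i s b (b i).
  by rewrite /objective -!(QK HK1K).
have h3 : G (pi K.+1 i s b) = exec pK s [set j : 'I_n | (j < m)%N] b.
  apply: (fp_uniq HEd (Hassoc K) _ (exec_fp HEd _ _ _ (Hassoc K))).
  have pre : forall l : 'I_n, (l < m)%N -> G (pi K.+1 i s b) l = b l.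
    move=> l hl; rewrite (HG _ l) inE ltnS (ltnW hl) jupd_out //.
    by rewrite neq_ltn hl orbT.
  move=> j; rewrite inE.
  case: (eqVneq i j) => [<-|nij].
    rewrite ltnn (HG _ i) inE ltnSn jupd_in [LHS]piK_fix.
    by apply: Hassoc => l /HEd hl; rewrite pre.
  case: ifP => hjm; first by apply: pre.
  rewrite (HG _ j) inE ltnS leq_eqVlt hjm orbF.
  have -> : (j == m :> nat) = false.
    by apply/negbTE; apply: contra nij => /eqP e'; apply/eqP/val_inj.
  by [].
by apply: le_trans h1 (le_trans h2 _); rewrite h3.
Qed.

Lemma opt_greedy s b : Qc s b <= Qc s (sig K s).
Proof.
have := Cstep (d := n) (m := 0) (add0n n) s b.
suff -> : exec (pi K) s [set j : 'I_n | (j < 0)%N] b = sig K s by [].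
apply/ffunP => j.
apply: (fp_agree HEd (Z := predT) (Hassoc K) (exec_fp HEd s _ b (Hassoc K)) (exec_fp HEd s _ a0 (Hassoc K))) => //.
by move=> j' _; rewrite !inE.
Qed.

Lemma final_opt s : V K s = Vstar P r gamma s.
Proof.
have HK1K : (K1 <= K)%N by rewrite /K leq_addr.
have Hge : forall sg s, Vsig P r gamma sg s <= V K s.
  move=> sg; apply: (comp_ge HP0 HP1 Hgamma) => s'.
  rewrite Vbell.
  have -> : r s' (sg s') + gamma * \sum_(u : S) P s' (sg s') u * V K u = Q K s' (sg s') by [].
  by rewrite !(QK HK1K); apply: opt_greedy.
apply/le_anti/andP; split.
  apply: ub_le_sup.
    exists (V K s) => _ [sg _ <-]; exact: Hge.
  by exists (sig K).
apply: ge_sup; first by exists (V K s), (sig K).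
by move=> _ [sg _ <-]; exact: Hge.
Qed.

End Conv.
End Main.

Theorem mainTheorem3 (R : realType) (n : nat) (S : finType) (Act : 'I_n -> finType)
  (P : S -> joint Act -> S -> R) (r : S -> joint Act -> R) (gamma : R)
  (HP0 : forall s a s', 0 <= P s a s')
  (HP1 : forall s a, \sum_(s' : S) P s a s' = 1)
  (Hgamma : 0 <= gamma < 1)
  (a0 : joint Act)
  (Ed : rel 'I_n) (HEd : forall i j : 'I_n, Ed j i -> (j < i)%N)
  (pi : nat -> dpolicy S Act)
  (Hassoc : forall k, assoc Ed (pi k))
  (Hupdate : forall (k : nat) (i : 'I_n) (s : S) (a : joint Act),
     is_argmax (objective P r gamma Ed a0 (pi k) (pi k.+1) i s a) (pi k.+1 i s a))
  (Hsingleton : forall (k : nat) (i : 'I_n) (s : S) (a : joint Act) (x y : Act i),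
     (1 <= k)%N ->
     is_argmax (objective P r gamma Ed a0 (pi k) (pi k.+1) i s a) x ->
     is_argmax (objective P r gamma Ed a0 (pi k) (pi k.+1) i s a) y -> x = y)
  (Ec : rel 'I_n) (HEc_sym : symmetric Ec) (HEc_irr : irreflexive Ec)
  (HCG : is_CG Ec (QofV P r gamma (Vcirc P r gamma a0 pi)))
  (HN : forall i : 'I_n, Nd Ed i = Nc Ec (iplus i)) :
  exists K : nat,
    (forall k, (K <= k)%N -> forall (i : 'I_n) (s : S) (a : joint Act), pi k i s a = pi K i s a) /\
    (forall s, Vpol P r gamma a0 (pi K) s = Vstar P r gamma s).
Proof.
have [K1 [HK1pos HK1]] := V_eventually HP0 HP1 Hgamma HEd Hassoc Hupdate.
exists (K1 + n)%N; split.
  move=> k hk i s a.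
  by apply: (pol_const Hgamma HEd Hassoc Hupdate Hsingleton HEc_sym HCG HN HK1pos HK1) => //; rewrite subnn.
exact: (final_opt HP0 HP1 Hgamma HEd Hassoc Hupdate Hsingleton HEc_sym HCG HN HK1pos HK1).
Qed.
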